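(* Let $\mathbb H(t)=4\arctan(e^t)$ and let $\lambda=q+ip$ with $q,p\in\mathbb{R}$, $q^2+p^2=1$, $p>0$, $\lambda\ne i$. Suppose $\Phi\in C^\infty(\mathbb{R}^2;\mathbb{C}^2)$ is parallel with respect to $(\mathbb H(x),\lambda)$ and $\sup_{(x,y)\in\ell}|\Phi(x,y)|<\infty$, where $\ell=\{(x,y)\in\mathbb{R}^2:-qx+py=0\}$. Then $\Phi\equiv0$.
   Context: Pauli matrices $\sigma_1=\begin{pmatrix}0&1\\1&0\end{pmatrix}$, $\sigma_2=\begin{pmatrix}0&-i\\ i&0\end{pmatrix}$, $\sigma_3=\begin{pmatrix}1&0\\0&-1\end{pmatrix}$. For $u\in C^\infty(\mathbb{R}^2)$, $\lambda\ne0$: $A=\frac i4\big((\lambda-\lambda^{-1}\cos u)\sigma_3-(\partial_xu-i\partial_yu)\sigma_2-\lambda^{-1}(\sin u)\sigma_1\big)$, $B=\frac14\big(-(\lambda+\lambda^{-1}\cos u)\sigma_3+(\partial_xu-i\partial_yu)\sigma_2-\lambda^{-1}(\sin u)\sigma_1\big)$; $\Phi$ is parallel with respect to $(u,\lambda)$ if $\partial_x\Phi=A\Phi$ and $\partial_y\Phi=B\Phi$ on $\mathbb{R}^2$. *)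

(* Defs.v *)
From Stdlib Require Import Reals.
From Coquelicot Require Import Coquelicot.
Open Scope R_scope.

Definition C2 : Type := (C * C)%type.
Record Mat2 := mk2 { m11 : C; m12 : C; m21 : C; m22 : C }.

Definition mat_add (M N : Mat2) : Mat2 :=
  mk2 (m11 M + m11 N)%C (m12 M + m12 N)%C (m21 M + m21 N)%C (m22 M + m22 N)%C.
Definition mat_scal (c : C) (M : Mat2) : Mat2 :=
  mk2 (c * m11 M)%C (c * m12 M)%C (c * m21 M)%C (c * m22 M)%C.
Definition mat_vec (M : Mat2) (v : C2) : C2 :=
  ((m11 M * fst v + m12 M * snd v)%C, (m21 M * fst v + m22 M * snd v)%C).

Definition sigma1 : Mat2 := mk2 0%C 1%C 1%C 0%C.
Definition sigma2 : Mat2 := mk2 0%C (- Ci)%C Ci 0%C.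
Definition sigma3 : Mat2 := mk2 1%C 0%C 0%C (-1)%C.

Definition dxu (u : R -> R -> R) (x y : R) : R := Derive (fun t => u t y) x.
Definition dyu (u : R -> R -> R) (x y : R) : R := Derive (fun t => u x t) y.

Definition Amat (u : R -> R -> R) (lam : C) (x y : R) : Mat2 :=
  let w := (RtoC (dxu u x y) - Ci * RtoC (dyu u x y))%C in
  mat_scal (Ci / RtoC 4)%C
    (mat_add (mat_add
       (mat_scal (lam - / lam * RtoC (cos (u x y)))%C sigma3)
       (mat_scal (- w)%C sigma2))
       (mat_scal (- (/ lam * RtoC (sin (u x y))))%C sigma1)).

Definition Bmat (u : R -> R -> R) (lam : C) (x y : R) : Mat2 :=
  let w := (RtoC (dxu u x y) - Ci * RtoC (dyu u x y))%C in
  mat_scal (/ RtoC 4)%C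
    (mat_add (mat_add
       (mat_scal (- (lam + / lam * RtoC (cos (u x y))))%C sigma3)
       (mat_scal w sigma2))
       (mat_scal (- (/ lam * RtoC (sin (u x y))))%C sigma1)).

Definition parallel (u : R -> R -> R) (lam : C) (Phi : R -> R -> C2) : Prop :=
  forall x y : R,
    is_derive (fun t => fst (Phi t y)) x (fst (mat_vec (Amat u lam x y) (Phi x y))) /\
    is_derive (fun t => snd (Phi t y)) x (snd (mat_vec (Amat u lam x y) (Phi x y))) /\
    is_derive (fun t => fst (Phi x t)) y (fst (mat_vec (Bmat u lam x y) (Phi x y))) /\
    is_derive (fun t => snd (Phi x t)) y (snd (mat_vec (Bmat u lam x y) (Phi x y))).

Fixpoint Ck2 (k : nat) (f : R -> R -> R) : Prop :=
  (forall p : R * R, continuous (fun q : R * R => f (fst q) (snd q)) p) /\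
  match k with
  | O => True
  | S k' => exists fx fy : R -> R -> R,
      (forall x y, is_derive (fun t => f t y) x (fx x y)) /\
      (forall x y, is_derive (fun t => f x t) y (fy x y)) /\
      Ck2 k' fx /\ Ck2 k' fy
  end.

Definition smooth2 (f : R -> R -> R) : Prop := forall k, Ck2 k f.

Definition smoothC2 (Phi : R -> R -> C2) : Prop :=
  smooth2 (fun x y => Re (fst (Phi x y))) /\ smooth2 (fun x y => Im (fst (Phi x y))) /\
  smooth2 (fun x y => Re (snd (Phi x y))) /\ smooth2 (fun x y => Im (snd (Phi x y))).

Definition normC2 (v : C2) : R := sqrt (Cmod (fst v) ^ 2 + Cmod (snd v) ^ 2).

Definition Hkink (t : R) : R := 4 * atan (exp t).

(* Main.v *)
Require Import Defs.
From Stdlib Require Import Reals Lra Psatz.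
From Coquelicot Require Import Coquelicot.
Open Scope R_scope.
Definition Sx (x : R) : R := 2 * exp x / (1 + exp x ^ 2).
Definition Tx (x : R) : R := (exp x ^ 2 - 1) / (1 + exp x ^ 2).

Lemma den_pos x : 0 < 1 + exp x ^ 2.
Proof. pose proof (exp_pos x). nra. Qed.

Lemma dSx x : is_derive (fun t => - Sx t) x (Sx x * Tx x).
Proof. pose proof (den_pos x). unfold Sx, Tx. auto_derive. lra. field. lra. Qed.
Lemma dSx' x : is_derive (fun t => Sx t) x (- (Sx x * Tx x)).
Proof. pose proof (den_pos x). unfold Sx, Tx. auto_derive. lra. field. lra. Qed.
Lemma dTx1 (p x : R) : is_derive (fun t => - (p + Tx t)) x (- (Sx x ^ 2)).
Proof. pose proof (den_pos x). unfold Sx, Tx. auto_derive. lra. field. lra. Qed.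
Lemma dTx2 (p x : R) : is_derive (fun t => - (Tx t - p)) x (- (Sx x ^ 2)).
Proof. pose proof (den_pos x). unfold Sx, Tx. auto_derive. lra. field. lra. Qed.
Lemma dH x : is_derive Hkink x (2 * Sx x).
Proof. pose proof (den_pos x). unfold Hkink, Sx. auto_derive. auto. field. lra. Qed.

Lemma cs2 x : cos (2 * atan (exp x)) = - Tx x /\ sin (2 * atan (exp x)) = Sx x.
Proof.
  pose proof (den_pos x) as Hd.
  set (a := atan (exp x)).
  assert (0 < sqrt (1 + exp x * exp x)) by (apply sqrt_lt_R0; nra).
  split.
  { rewrite cos_2a. unfold a. rewrite cos_atan, sin_atan. unfold Rsqr.
    unfold Tx. field_simplify; [|lra|lra]. rewrite !pow2_sqrt by nra. field. lra. }
  { rewrite sin_2a. unfold a. rewrite cos_atan, sin_atan. unfold Rsqr.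
    unfold Sx. field_simplify; [|lra|lra]. rewrite !pow2_sqrt by nra. field. lra. }
Qed.

Lemma cosH x : cos (Hkink x) = Tx x ^ 2 - Sx x ^ 2.
Proof.
  destruct (cs2 x) as [c2 s2]. unfold Hkink.
  replace (4 * atan (exp x)) with (2 * (2 * atan (exp x))) by ring. rewrite cos_2a, c2, s2. ring.
Qed.
Lemma sinH x : sin (Hkink x) = -2 * Sx x * Tx x.
Proof.
  destruct (cs2 x) as [c2 s2]. unfold Hkink.
  replace (4 * atan (exp x)) with (2 * (2 * atan (exp x))) by ring. rewrite sin_2a, c2, s2. ring.
Qed.

Definition AM (q p k cH sH dH : R) : Mat2 :=
  mat_scal (Ci * RtoC k)%C
    (mat_add (mat_add
       (mat_scal ((q,p) - (q, Ropp p) * RtoC cH)%C sigma3)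
       (mat_scal (- (RtoC dH - Ci * RtoC 0))%C sigma2))
       (mat_scal (- ((q, Ropp p) * RtoC sH))%C sigma1)).
Definition BM (q p k cH sH dH : R) : Mat2 :=
  mat_scal (RtoC k)
    (mat_add (mat_add
       (mat_scal (- ((q,p) + (q, Ropp p) * RtoC cH))%C sigma3)
       (mat_scal (RtoC dH - Ci * RtoC 0)%C sigma2))
       (mat_scal (- ((q, Ropp p) * RtoC sH))%C sigma1)).

Lemma cinv1 q p : q ^ 2 + p ^ 2 = 1 -> Cinv (q, p) = (q, Ropp p).
Proof. intros H. unfold Cinv. simpl. simpl in H. rewrite H. f_equal; field. Qed.

Lemma dxuH x y : dxu (fun x _ => Hkink x) x y = 2 * Sx x.
Proof. unfold dxu. apply is_derive_unique. apply dH. Qed.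
Lemma dyuH x y : dyu (fun x _ => Hkink x) x y = 0.
Proof. unfold dyu. apply Derive_const. Qed.

Lemma Amat_eq q p x y : q ^ 2 + p ^ 2 = 1 ->
  Amat (fun x _ => Hkink x) (q, p) x y = AM q p (/4) (Tx x ^ 2 - Sx x ^ 2) (-2 * Sx x * Tx x) (2 * Sx x).
Proof.
  intros H. unfold Amat, AM. cbv beta zeta. rewrite dxuH, dyuH, cosH, sinH, (cinv1 q p H).
  unfold Cdiv. rewrite <- RtoC_inv by lra. reflexivity.
Qed.
Lemma Bmat_eq q p x y : q ^ 2 + p ^ 2 = 1 ->
  Bmat (fun x _ => Hkink x) (q, p) x y = BM q p (/4) (Tx x ^ 2 - Sx x ^ 2) (-2 * Sx x * Tx x) (2 * Sx x).
Proof.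
  intros H. unfold Bmat, BM. cbv beta zeta. rewrite dxuH, dyuH, cosH, sinH, (cinv1 q p H).
  rewrite <- RtoC_inv by lra. reflexivity.
Qed.

Lemma combo (e g1 g2 g3 g4 f1 f2 f3 f4 : R -> R) x k e' g1' g2' g3' g4' f1' f2' f3' f4' :
  is_derive e x e' -> is_derive g1 x g1' -> is_derive g2 x g2' -> is_derive g3 x g3' ->
  is_derive g4 x g4' -> is_derive f1 x f1' -> is_derive f2 x f2' -> is_derive f3 x f3' ->
  is_derive f4 x f4' -> e' = k * e x ->
  k * (g1 x * f1 x + g2 x * f2 x + g3 x * f3 x + g4 x * f4 x) +
   ((g1' * f1 x + g1 x * f1') + (g2' * f2 x + g2 x * f2') + (g3' * f3 x + g3 x * f3')
    + (g4' * f4 x + g4 x * f4')) = 0 ->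
  is_derive (fun t => e t * (g1 t * f1 t + g2 t * f2 t + g3 t * f3 t + g4 t * f4 t)) x 0.
Proof.
  intros He H1 H2 H3 H4 K1 K2 K3 K4 Ek Z.
  assert (M1 := is_derive_mult g1 f1 x _ _ H1 K1 Rmult_comm).
  assert (M2 := is_derive_mult g2 f2 x _ _ H2 K2 Rmult_comm).
  assert (M3 := is_derive_mult g3 f3 x _ _ H3 K3 Rmult_comm).
  assert (M4 := is_derive_mult g4 f4 x _ _ H4 K4 Rmult_comm).
  assert (P := is_derive_plus _ _ _ _ _ (is_derive_plus _ _ _ _ _ (is_derive_plus _ _ _ _ _ M1 M2) M3) M4).
  assert (Q := is_derive_mult e _ x _ _ He P Rmult_comm).
  match type of Q with is_derive _ _ ?v => replace 0 with v end. exact Q.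
  unfold plus, mult; simpl. rewrite Ek.
  transitivity (e x * (k * (g1 x * f1 x + g2 x * f2 x + g3 x * f3 x + g4 x * f4 x) +
   ((g1' * f1 x + g1 x * f1') + (g2' * f2 x + g2 x * f2') + (g3' * f3 x + g3 x * f3')
    + (g4' * f4 x + g4 x * f4')))). ring. rewrite Z. ring.
Qed.

Ltac alg := intros HE Hq Hp HS HT Hv; subst;
  unfold AM, BM, mat_vec, mat_scal, mat_add, sigma1, sigma2, sigma3 in Hv; simpl in Hv;
  injection Hv as H1 H2 H3 H4; subst; field; split; nra.

Section Alg.
Variables (r E q p S T a b c d A1r A1i A2r A2i : R).
Let hyps (M : Mat2) (P : Prop) := 0 < E ->
  q = (1-r^2)/(1+r^2) -> p = 2*r/(1+r^2) -> S = 2*E/(1+E^2) -> T = (E^2-1)/(1+E^2) ->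
  mat_vec M ((a,b),(c,d)) = ((A1r,A1i),(A2r,A2i)) -> P.
Let AMv := AM q p (/4) (T^2-S^2) (-2*S*T) (2*S).
Let BMv := BM q p (/4) (T^2-S^2) (-2*S*T) (2*S).

Lemma w1r_x : hyps AMv ((-(p/2))*((-S)*a + 0*b + (-(p+T))*c + (-q)*d) +
   (((S*T)*a + (-S)*A1r) + (0*b + 0*A1i) + ((-(S^2))*c + (-(p+T))*A2r) + (0*d + (-q)*A2i)) = 0).
Proof. unfold hyps, AMv. alg. Qed.
Lemma w1i_x : hyps AMv ((-(p/2))*(0*a + (-S)*b + q*c + (-(p+T))*d) +
   ((0*a + 0*A1r) + ((S*T)*b + (-S)*A1i) + (0*c + q*A2r) + ((-(S^2))*d + (-(p+T))*A2i)) = 0).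
Proof. unfold hyps, AMv. alg. Qed.
Lemma w2r_x : hyps AMv ((p/2)*((-(T-p))*a + q*b + S*c + 0*d) +
   (((-(S^2))*a + (-(T-p))*A1r) + (0*b + q*A1i) + ((-(S*T))*c + S*A2r) + (0*d + 0*A2i)) = 0).
Proof. unfold hyps, AMv. alg. Qed.
Lemma w2i_x : hyps AMv ((p/2)*((-q)*a + (-(T-p))*b + 0*c + S*d) +
   ((0*a + (-q)*A1r) + ((-(S^2))*b + (-(T-p))*A1i) + (0*c + 0*A2r) + ((-(S*T))*d + S*A2i)) = 0).
Proof. unfold hyps, AMv. alg. Qed.
Lemma w1r_y : hyps BMv ((-(q/2))*((-S)*a + 0*b + (-(p+T))*c + (-q)*d) +
   ((0*a + (-S)*A1r) + (0*b + 0*A1i) + (0*c + (-(p+T))*A2r) + (0*d + (-q)*A2i)) = 0).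
Proof. unfold hyps, BMv. alg. Qed.
Lemma w1i_y : hyps BMv ((-(q/2))*(0*a + (-S)*b + q*c + (-(p+T))*d) +
   ((0*a + 0*A1r) + (0*b + (-S)*A1i) + (0*c + q*A2r) + (0*d + (-(p+T))*A2i)) = 0).
Proof. unfold hyps, BMv. alg. Qed.
Lemma w2r_y : hyps BMv ((q/2)*((-(T-p))*a + q*b + S*c + 0*d) +
   ((0*a + (-(T-p))*A1r) + (0*b + q*A1i) + (0*c + S*A2r) + (0*d + 0*A2i)) = 0).
Proof. unfold hyps, BMv. alg. Qed.
Lemma w2i_y : hyps BMv ((q/2)*((-q)*a + (-(T-p))*b + 0*c + S*d) +
   ((0*a + (-q)*A1r) + (0*b + (-(T-p))*A1i) + (0*c + 0*A2r) + (0*d + S*A2i)) = 0).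
Proof. unfold hyps, BMv. alg. Qed.
End Alg.

Lemma der_re (f : R -> C) x l : is_derive f x l -> is_derive (fun t => fst (f t)) x (fst l).
Proof.
intros H. unfold is_derive in *.
apply (filterdiff_comp' f (fun t : C => fst t) x _ (fun t : C => fst t)) in H.
exact H.
apply filterdiff_linear. apply (is_linear_fst (K:=R_AbsRing) (U:=R_NormedModule) (V:=R_NormedModule)).
Qed.
Lemma der_im (f : R -> C) x l : is_derive f x l -> is_derive (fun t => snd (f t)) x (snd l).
Proof.
intros H. unfold is_derive in *.
apply (filterdiff_comp' f (fun t : C => snd t) x _ (fun t : C => snd t)) in H.
exact H.
apply filterdiff_linear. apply (is_linear_snd (K:=R_AbsRing) (U:=R_NormedModule) (V:=R_NormedModule)).
Qed.

Lemma dconst (c x : R) : is_derive (fun _ : R => c) x 0.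
Proof. exact (is_derive_const (K:=R_AbsRing) (V:=R_NormedModule) c x). Qed.

Definition fa (Phi : R -> R -> C2) x y := fst (fst (Phi x y)).
Definition fb (Phi : R -> R -> C2) x y := snd (fst (Phi x y)).
Definition fc (Phi : R -> R -> C2) x y := fst (snd (Phi x y)).
Definition fd (Phi : R -> R -> C2) x y := snd (snd (Phi x y)).

Definition W1r Phi p q x y := exp (-(p*x+q*y)/2) *
  ((- Sx x) * fa Phi x y + 0 * fb Phi x y + (-(p + Tx x)) * fc Phi x y + (-q) * fd Phi x y).
Definition W1i Phi p q x y := exp (-(p*x+q*y)/2) *
  (0 * fa Phi x y + (- Sx x) * fb Phi x y + q * fc Phi x y + (-(p + Tx x)) * fd Phi x y).
Definition W2r Phi p q x y := exp ((p*x+q*y)/2) *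
  ((-(Tx x - p)) * fa Phi x y + q * fb Phi x y + Sx x * fc Phi x y + 0 * fd Phi x y).
Definition W2i Phi p q x y := exp ((p*x+q*y)/2) *
  ((-q) * fa Phi x y + (-(Tx x - p)) * fb Phi x y + 0 * fc Phi x y + Sx x * fd Phi x y).

Ltac finish L r Hq Hp Phi x y :=
  unfold fa, fb, fc, fd; cbv beta; destruct (Phi x y) as [[? ?] [? ?]];
  cbn [fst snd];
  eapply (L r (exp x)); [exact (exp_pos x)|exact Hq|exact Hp|reflexivity|reflexivity|];
  reflexivity.

Section Main.
Variables (q p r : R) (Phi : R -> R -> C2).
Hypothesis Hqp : q ^ 2 + p ^ 2 = 1.
Hypothesis Hq : q = (1-r^2)/(1+r^2).
Hypothesis Hp : p = 2*r/(1+r^2).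
Hypothesis Hpar : parallel (fun x _ => Hkink x) (q, p) Phi.

Lemma derA x y :
  is_derive (fun t => fa Phi t y) x (fst (fst (mat_vec (AM q p (/4) (Tx x ^ 2 - Sx x ^ 2) (-2 * Sx x * Tx x) (2 * Sx x)) (Phi x y)))) /\
  is_derive (fun t => fb Phi t y) x (snd (fst (mat_vec (AM q p (/4) (Tx x ^ 2 - Sx x ^ 2) (-2 * Sx x * Tx x) (2 * Sx x)) (Phi x y)))) /\
  is_derive (fun t => fc Phi t y) x (fst (snd (mat_vec (AM q p (/4) (Tx x ^ 2 - Sx x ^ 2) (-2 * Sx x * Tx x) (2 * Sx x)) (Phi x y)))) /\
  is_derive (fun t => fd Phi t y) x (snd (snd (mat_vec (AM q p (/4) (Tx x ^ 2 - Sx x ^ 2) (-2 * Sx x * Tx x) (2 * Sx x)) (Phi x y)))).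
Proof.
  destruct (Hpar x y) as (H1 & H2 & _ & _). rewrite (Amat_eq q p x y Hqp) in H1, H2.
  split; [|split; [|split]].
  - exact (der_re _ _ _ H1).
  - exact (der_im _ _ _ H1).
  - exact (der_re _ _ _ H2).
  - exact (der_im _ _ _ H2).
Qed.
Lemma derB x y :
  is_derive (fun t => fa Phi x t) y (fst (fst (mat_vec (BM q p (/4) (Tx x ^ 2 - Sx x ^ 2) (-2 * Sx x * Tx x) (2 * Sx x)) (Phi x y)))) /\
  is_derive (fun t => fb Phi x t) y (snd (fst (mat_vec (BM q p (/4) (Tx x ^ 2 - Sx x ^ 2) (-2 * Sx x * Tx x) (2 * Sx x)) (Phi x y)))) /\
  is_derive (fun t => fc Phi x t) y (fst (snd (mat_vec (BM q p (/4) (Tx x ^ 2 - Sx x ^ 2) (-2 * Sx x * Tx x) (2 * Sx x)) (Phi x y)))) /\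
  is_derive (fun t => fd Phi x t) y (snd (snd (mat_vec (BM q p (/4) (Tx x ^ 2 - Sx x ^ 2) (-2 * Sx x * Tx x) (2 * Sx x)) (Phi x y)))).
Proof.
  destruct (Hpar x y) as (_ & _ & H1 & H2). rewrite (Bmat_eq q p x y Hqp) in H1, H2.
  split; [|split; [|split]].
  - exact (der_re _ _ _ H1).
  - exact (der_im _ _ _ H1).
  - exact (der_re _ _ _ H2).
  - exact (der_im _ _ _ H2).
Qed.

Lemma W1r_x x y : is_derive (fun t => W1r Phi p q t y) x 0.
Proof.
  destruct (derA x y) as (K1 & K2 & K3 & K4). unfold W1r.
  eapply (combo (fun t => exp (-(p*t+q*y)/2)) (fun t => - Sx t) (fun _ => 0) (fun t => -(p + Tx t)) (fun _ => -q)
     (fun t => fa Phi t y) (fun t => fb Phi t y) (fun t => fc Phi t y) (fun t => fd Phi t y) x (-(p/2))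
     ((-(p/2)) * exp (-(p*x+q*y)/2)) (Sx x * Tx x) 0 (-(Sx x ^ 2)) 0 _ _ _ _).
  - auto_derive; [auto|unfold Rdiv; ring].
  - apply dSx.
  - apply dconst.
  - apply dTx1.
  - apply dconst.
  - exact K1. - exact K2. - exact K3. - exact K4.
  - reflexivity.
  - finish w1r_x r Hq Hp Phi x y.
Qed.

Lemma W1i_x x y : is_derive (fun t => W1i Phi p q t y) x 0.
Proof.
  destruct (derA x y) as (K1 & K2 & K3 & K4). unfold W1i.
  eapply (combo (fun t => exp (-(p*t+q*y)/2)) (fun _ => 0) (fun t => - Sx t) (fun _ => q) (fun t => -(p + Tx t))
     (fun t => fa Phi t y) (fun t => fb Phi t y) (fun t => fc Phi t y) (fun t => fd Phi t y) x (-(p/2))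
     ((-(p/2)) * exp (-(p*x+q*y)/2)) 0 (Sx x * Tx x) 0 (-(Sx x ^ 2)) _ _ _ _).
  - auto_derive; [auto|unfold Rdiv; ring].
  - apply dconst.
  - apply dSx.
  - apply dconst.
  - apply dTx1.
  - exact K1. - exact K2. - exact K3. - exact K4.
  - reflexivity.
  - finish w1i_x r Hq Hp Phi x y.
Qed.

Lemma W2r_x x y : is_derive (fun t => W2r Phi p q t y) x 0.
Proof.
  destruct (derA x y) as (K1 & K2 & K3 & K4). unfold W2r.
  eapply (combo (fun t => exp ((p*t+q*y)/2)) (fun t => -(Tx t - p)) (fun _ => q) (fun t => Sx t) (fun _ => 0)
     (fun t => fa Phi t y) (fun t => fb Phi t y) (fun t => fc Phi t y) (fun t => fd Phi t y) x (p/2)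
     ((p/2) * exp ((p*x+q*y)/2)) (-(Sx x ^ 2)) 0 (-(Sx x * Tx x)) 0 _ _ _ _).
  - auto_derive; [auto|unfold Rdiv; ring].
  - apply dTx2.
  - apply dconst.
  - apply dSx'.
  - apply dconst.
  - exact K1. - exact K2. - exact K3. - exact K4.
  - reflexivity.
  - finish w2r_x r Hq Hp Phi x y.
Qed.

Lemma W2i_x x y : is_derive (fun t => W2i Phi p q t y) x 0.
Proof.
  destruct (derA x y) as (K1 & K2 & K3 & K4). unfold W2i.
  eapply (combo (fun t => exp ((p*t+q*y)/2)) (fun _ => -q) (fun t => -(Tx t - p)) (fun _ => 0) (fun t => Sx t)
     (fun t => fa Phi t y) (fun t => fb Phi t y) (fun t => fc Phi t y) (fun t => fd Phi t y) x (p/2)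
     ((p/2) * exp ((p*x+q*y)/2)) 0 (-(Sx x ^ 2)) 0 (-(Sx x * Tx x)) _ _ _ _).
  - auto_derive; [auto|unfold Rdiv; ring].
  - apply dconst.
  - apply dTx2.
  - apply dconst.
  - apply dSx'.
  - exact K1. - exact K2. - exact K3. - exact K4.
  - reflexivity.
  - finish w2i_x r Hq Hp Phi x y.
Qed.

Lemma W1r_y x y : is_derive (fun t => W1r Phi p q x t) y 0.
Proof.
  destruct (derB x y) as (K1 & K2 & K3 & K4). unfold W1r.
  eapply (combo (fun t => exp (-(p*x+q*t)/2)) (fun _ => (- Sx x)) (fun _ => 0) (fun _ => (-(p + Tx x))) (fun _ => (-q))
     (fun t => fa Phi x t) (fun t => fb Phi x t) (fun t => fc Phi x t) (fun t => fd Phi x t) y (-(q/2))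
     ((-(q/2)) * exp (-(p*x+q*y)/2)) 0 0 0 0 _ _ _ _).
  - auto_derive; [auto|unfold Rdiv; ring].
  - apply dconst. - apply dconst. - apply dconst. - apply dconst.
  - exact K1. - exact K2. - exact K3. - exact K4.
  - reflexivity.
  - finish w1r_y r Hq Hp Phi x y.
Qed.

Lemma W1i_y x y : is_derive (fun t => W1i Phi p q x t) y 0.
Proof.
  destruct (derB x y) as (K1 & K2 & K3 & K4). unfold W1i.
  eapply (combo (fun t => exp (-(p*x+q*t)/2)) (fun _ => 0) (fun _ => (- Sx x)) (fun _ => q) (fun _ => (-(p + Tx x)))
     (fun t => fa Phi x t) (fun t => fb Phi x t) (fun t => fc Phi x t) (fun t => fd Phi x t) y (-(q/2))
     ((-(q/2)) * exp (-(p*x+q*y)/2)) 0 0 0 0 _ _ _ _).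
  - auto_derive; [auto|unfold Rdiv; ring].
  - apply dconst. - apply dconst. - apply dconst. - apply dconst.
  - exact K1. - exact K2. - exact K3. - exact K4.
  - reflexivity.
  - finish w1i_y r Hq Hp Phi x y.
Qed.

Lemma W2r_y x y : is_derive (fun t => W2r Phi p q x t) y 0.
Proof.
  destruct (derB x y) as (K1 & K2 & K3 & K4). unfold W2r.
  eapply (combo (fun t => exp ((p*x+q*t)/2)) (fun _ => (-(Tx x - p))) (fun _ => q) (fun _ => (Sx x)) (fun _ => 0)
     (fun t => fa Phi x t) (fun t => fb Phi x t) (fun t => fc Phi x t) (fun t => fd Phi x t) y (q/2)
     ((q/2) * exp ((p*x+q*y)/2)) 0 0 0 0 _ _ _ _).
  - auto_derive; [auto|unfold Rdiv; ring].
  - apply dconst. - apply dconst. - apply dconst. - apply dconst.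
  - exact K1. - exact K2. - exact K3. - exact K4.
  - reflexivity.
  - finish w2r_y r Hq Hp Phi x y.
Qed.

Lemma W2i_y x y : is_derive (fun t => W2i Phi p q x t) y 0.
Proof.
  destruct (derB x y) as (K1 & K2 & K3 & K4). unfold W2i.
  eapply (combo (fun t => exp ((p*x+q*t)/2)) (fun _ => (-q)) (fun _ => (-(Tx x - p))) (fun _ => 0) (fun _ => (Sx x))
     (fun t => fa Phi x t) (fun t => fb Phi x t) (fun t => fc Phi x t) (fun t => fd Phi x t) y (q/2)
     ((q/2) * exp ((p*x+q*y)/2)) 0 0 0 0 _ _ _ _).
  - auto_derive; [auto|unfold Rdiv; ring].
  - apply dconst. - apply dconst. - apply dconst. - apply dconst.
  - exact K1. - exact K2. - exact K3. - exact K4.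
  - reflexivity.
  - finish w2i_y r Hq Hp Phi x y.
Qed.
End Main.

Lemma const1 (f : R -> R) : (forall t, is_derive f t 0) -> forall a b, f a = f b.
Proof.
  intros H a b. destruct (Rtotal_order a b) as [h|[h|h]].
  - apply (eq_is_derive f a b); [intros t _; exact (H t)|exact h].
  - subst; reflexivity.
  - symmetry. apply (eq_is_derive f b a); [intros t _; exact (H t)|exact h].
Qed.

Lemma const2 (F : R -> R -> R) : (forall x y, is_derive (fun t => F t y) x 0) ->
  (forall x y, is_derive (fun t => F x t) y 0) -> forall x y, F x y = F 0 0.
Proof.
  intros H1 H2 x y.
  rewrite (const1 (fun t => F t y) (fun t => H1 t y) x 0).
  exact (const1 (fun t => F 0 t) (fun t => H2 0 t) y 0).
Qed.

Lemma abs_le_sqrt u v : Rabs u <= sqrt (u ^ 2 + v ^ 2).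
Proof. rewrite <- sqrt_Rsqr_abs. apply sqrt_le_1_alt. unfold Rsqr. nra. Qed.

Lemma comp_bounds (v : C2) : Rabs (fst (fst v)) <= normC2 v /\ Rabs (snd (fst v)) <= normC2 v /\
  Rabs (fst (snd v)) <= normC2 v /\ Rabs (snd (snd v)) <= normC2 v.
Proof.
  destruct v as [[a b] [c d]]. unfold normC2, Cmod. simpl.
  assert (A1 : Rabs (sqrt (a ^ 2 + b ^ 2)) <= sqrt (sqrt (a ^ 2 + b ^ 2) ^ 2 + sqrt (c ^ 2 + d ^ 2) ^ 2))
    by apply abs_le_sqrt.
  assert (A2 : Rabs (sqrt (c ^ 2 + d ^ 2)) <= sqrt (sqrt (c ^ 2 + d ^ 2) ^ 2 + sqrt (a ^ 2 + b ^ 2) ^ 2))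
    by apply abs_le_sqrt.
  rewrite (Rplus_comm (sqrt (c ^ 2 + d ^ 2) ^ 2)) in A2.
  rewrite Rabs_pos_eq in A1, A2 by apply sqrt_pos.
  pose proof (abs_le_sqrt a b). pose proof (abs_le_sqrt c d).
  pose proof (abs_le_sqrt b a). pose proof (abs_le_sqrt d c).
  rewrite (Rplus_comm (b^2)) in H1. rewrite (Rplus_comm (d^2)) in H2.
  simpl in *. repeat split; lra.
Qed.

Lemma pos_of_mul s D : 0 < D -> 0 <= s * D -> 0 <= s.
Proof. intros HD H. destruct (Rle_or_lt 0 s); auto. nra. Qed.

Lemma Sx_bound x : Rabs (Sx x) <= 1.
Proof.
  pose proof (den_pos x) as HD. pose proof (exp_pos x).
  assert (h : Sx x * (1 + exp x ^ 2) = 2 * exp x) by (unfold Sx; field; lra).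
  apply Rabs_le. split.
  - assert (0 <= (Sx x + 1) * (1 + exp x ^ 2)) by (rewrite Rmult_plus_distr_r, h; pose proof (pow2_ge_0 (exp x - 1)); pose proof (pow2_ge_0 (exp x + 1)); pose proof (pow2_ge_0 (exp x)); nra). pose proof (pos_of_mul _ _ HD H0). lra.
  - assert (0 <= (1 - Sx x) * (1 + exp x ^ 2)) by (rewrite Rmult_minus_distr_r, h; pose proof (pow2_ge_0 (exp x - 1)); pose proof (pow2_ge_0 (exp x + 1)); pose proof (pow2_ge_0 (exp x)); nra). pose proof (pos_of_mul _ _ HD H0). lra.
Qed.
Lemma Tx_bound x : Rabs (Tx x) <= 1.
Proof.
  pose proof (den_pos x) as HD. pose proof (exp_pos x).
  assert (h : Tx x * (1 + exp x ^ 2) = exp x ^ 2 - 1) by (unfold Tx; field; lra).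
  apply Rabs_le. split.
  - assert (0 <= (Tx x + 1) * (1 + exp x ^ 2)) by (rewrite Rmult_plus_distr_r, h; pose proof (pow2_ge_0 (exp x - 1)); pose proof (pow2_ge_0 (exp x + 1)); pose proof (pow2_ge_0 (exp x)); nra). pose proof (pos_of_mul _ _ HD H0). lra.
  - assert (0 <= (1 - Tx x) * (1 + exp x ^ 2)) by (rewrite Rmult_minus_distr_r, h; pose proof (pow2_ge_0 (exp x - 1)); pose proof (pow2_ge_0 (exp x + 1)); pose proof (pow2_ge_0 (exp x)); nra). pose proof (pos_of_mul _ _ HD H0). lra.
Qed.

Lemma vanish (K B : R) (h : R -> R) : 0 <= B ->
  (forall t, 0 <= t -> Rabs (h t) <= B * exp (- t / 2)) -> (forall t, h t = K) -> K = 0.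
Proof.
  intros HB Hb Hh.
  destruct (Req_dec K 0) as [|HK]; auto. exfalso.
  assert (Ka : 0 < Rabs K) by (apply Rabs_pos_lt; auto).
  set (u := B / Rabs K + 1).
  assert (Hu : 0 < u) by (unfold u; assert (0 <= B / Rabs K) by (apply Rdiv_le_0_compat; lra); lra).
  assert (Hu' : u * Rabs K = B + Rabs K) by (unfold u; field; lra).
  pose proof (Hb (2 * u) ltac:(lra)) as Hb2. rewrite Hh in Hb2.
  replace (- (2 * u) / 2) with (- u) in Hb2 by field.
  pose proof (exp_ineq1 u ltac:(lra)).
  assert (E1 : exp (- u) * exp u = 1) by (rewrite <- exp_plus; replace (- u + u) with 0 by ring; apply exp_0).
  pose proof (exp_pos u). pose proof (exp_pos (- u)).
  assert (Rabs K * exp u <= B) by nra.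
  nra.
Qed.

Lemma sum_bound (g1 g2 g3 g4 a b c d M : R) : Rabs g1 <= 2 -> Rabs g2 <= 2 -> Rabs g3 <= 2 ->
  Rabs g4 <= 2 -> Rabs a <= M -> Rabs b <= M -> Rabs c <= M -> Rabs d <= M ->
  Rabs (g1 * a + g2 * b + g3 * c + g4 * d) <= 8 * M.
Proof.
  intros.
  assert (forall g z, Rabs g <= 2 -> Rabs z <= M -> Rabs (g * z) <= 2 * M).
  { intros g z Hg Hz. rewrite Rabs_mult. apply Rmult_le_compat; auto; apply Rabs_pos. }
  pose proof (H7 _ _ H H3). pose proof (H7 _ _ H0 H4). pose proof (H7 _ _ H1 H5). pose proof (H7 _ _ H2 H6).
  pose proof (Rabs_triang (g1 * a + g2 * b + g3 * c) (g4 * d)).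
  pose proof (Rabs_triang (g1 * a + g2 * b) (g3 * c)).
  pose proof (Rabs_triang (g1 * a) (g2 * b)).
  lra.
Qed.

Lemma van (sg : R) (p q M K : R) (Phi : R -> R -> C2) (G1 G2 G3 G4 : R -> R) :
  q ^ 2 + p ^ 2 = 1 -> (sg = 1 \/ sg = -1) ->
  (forall x y, - q * x + p * y = 0 -> normC2 (Phi x y) <= M) ->
  (forall x, Rabs (G1 x) <= 2) -> (forall x, Rabs (G2 x) <= 2) ->
  (forall x, Rabs (G3 x) <= 2) -> (forall x, Rabs (G4 x) <= 2) ->
  (forall x y, exp (sg * (p * x + q * y) / 2) *
     (G1 x * fa Phi x y + G2 x * fb Phi x y + G3 x * fc Phi x y + G4 x * fd Phi x y) = K) ->
  K = 0.
Proof.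
  intros Hqp Hsg HM B1 B2 B3 B4 HW.
  assert (M0 : 0 <= M) by (pose proof (HM 0 0 ltac:(ring)); pose proof (sqrt_pos (Cmod (fst (Phi 0 0)) ^ 2 + Cmod (snd (Phi 0 0)) ^ 2)); unfold normC2 in *; lra).
  apply (vanish K (8 * M) (fun t => exp (sg * (p * (- sg * t * p) + q * (- sg * t * q)) / 2) *
     (G1 (- sg * t * p) * fa Phi (- sg * t * p) (- sg * t * q) + G2 (- sg * t * p) * fb Phi (- sg * t * p) (- sg * t * q)
      + G3 (- sg * t * p) * fc Phi (- sg * t * p) (- sg * t * q) + G4 (- sg * t * p) * fd Phi (- sg * t * p) (- sg * t * q)))).
  - lra.
  - intros t ht.
    replace (sg * (p * (- sg * t * p) + q * (- sg * t * q)) / 2) with (- t / 2).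
    2: { replace (sg * (p * (- sg * t * p) + q * (- sg * t * q))) with (- (sg * sg) * t * (q ^ 2 + p ^ 2)) by ring.
         rewrite Hqp. destruct Hsg; subst; field. }
    rewrite Rabs_mult, Rabs_pos_eq by (apply Rlt_le, exp_pos).
    rewrite Rmult_comm. apply Rmult_le_compat_r. apply Rlt_le, exp_pos.
    destruct (comp_bounds (Phi (- sg * t * p) (- sg * t * q))) as (C1 & C2 & C3 & C4).
    pose proof (HM (- sg * t * p) (- sg * t * q) ltac:(ring)).
    apply sum_bound; auto; unfold fa, fb, fc, fd; lra.
  - intros t. apply HW.
Qed.

Lemma final_alg r E q p S T a b c d : 0 < E -> q = (1-r^2)/(1+r^2) -> p = 2*r/(1+r^2) ->
  S = 2*E/(1+E^2) -> T = (E^2-1)/(1+E^2) -> q <> 0 ->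
  (- S) * a + 0 * b + (-(p + T)) * c + (-q) * d = 0 ->
  0 * a + (- S) * b + q * c + (-(p + T)) * d = 0 ->
  (-(T - p)) * a + q * b + S * c + 0 * d = 0 ->
  (-q) * a + (-(T - p)) * b + 0 * c + S * d = 0 ->
  a = 0 /\ b = 0 /\ c = 0 /\ d = 0.
Proof.
  intros HE Hq Hp HS HT Hq0 e1r e1i e2r e2i.
  set (E1 := (- S) * a + 0 * b + (-(p + T)) * c + (-q) * d) in *.
  set (E2 := 0 * a + (- S) * b + q * c + (-(p + T)) * d) in *.
  set (E3 := (-(T - p)) * a + q * b + S * c + 0 * d) in *.
  set (E4 := (-q) * a + (-(T - p)) * b + 0 * c + S * d) in *.
  assert (I1 : -2 * q * a = q * (S*E1+(p+T)*E3+q*E4) + p * (S*E2+(p+T)*E4-q*E3))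
    by (unfold E1, E2, E3, E4; subst; field; split; nra).
  assert (I2 : -2 * q * b = q * (S*E2+(p+T)*E4-q*E3) - p * (S*E1+(p+T)*E3+q*E4))
    by (unfold E1, E2, E3, E4; subst; field; split; nra).
  assert (I3 : -2 * q * c = q * ((T-p)*E1-q*E2-S*E3) + p * ((T-p)*E2+q*E1-S*E4))
    by (unfold E1, E2, E3, E4; subst; field; split; nra).
  assert (I4 : -2 * q * d = q * ((T-p)*E2+q*E1-S*E4) - p * ((T-p)*E1-q*E2-S*E3))
    by (unfold E1, E2, E3, E4; subst; field; split; nra).
  rewrite e1r, e1i, e2r, e2i in I1, I2, I3, I4.
  assert (forall z, -2 * q * z = 0 -> z = 0).
  { intros z Hz. destruct (Rmult_integral _ _ Hz) as [h|h]; auto.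
    destruct (Rmult_integral _ _ h); lra. }
  repeat split; apply H; lra.
Qed.

Theorem corollary3p10 (q p : R) (Phi : R -> R -> C2) :
  q ^ 2 + p ^ 2 = 1 -> 0 < p -> (q, p) <> Ci ->
  smoothC2 Phi ->
  parallel (fun x _ => Hkink x) (q, p) Phi ->
  (exists M : R, forall x y : R, - q * x + p * y = 0 -> normC2 (Phi x y) <= M) ->
  forall x y : R, Phi x y = (RtoC 0, RtoC 0).
Proof.
  intros Hqp Hp0 Hci _ Hpar [M HM] x y.
  assert (Hq1 : 0 < 1 + q) by nra.
  assert (Hpp : p ^ 2 = 1 - q ^ 2) by lra.
  set (r := p / (1 + q)).
  assert (Hr2 : r ^ 2 = (1 - q ^ 2) / (1 + q) ^ 2) by (unfold r; rewrite <- Hpp; field; lra).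
  assert (Hq : q = (1 - r ^ 2) / (1 + r ^ 2)).
  { rewrite Hr2. field. split; [lra|]. nra. }
  assert (Hp : p = 2 * r / (1 + r ^ 2)).
  { rewrite Hr2. unfold r. field. split; [lra|]. nra. }
  assert (Hq0 : q <> 0).
  { intros h. apply Hci. assert (p = 1) by (rewrite h in Hpp; nra). rewrite h, H. reflexivity. }
  assert (B2 : forall z, Rabs z <= 1 -> Rabs (- z) <= 2) by (intros z h; rewrite Rabs_Ropp; lra).
  assert (Bq : Rabs q <= 1) by (apply Rabs_le; split; nra).
  assert (Bp : Rabs p <= 1) by (apply Rabs_le; split; nra).
  assert (Bz : forall x : R, Rabs ((fun _ => 0) x) <= 2) by (intros; rewrite Rabs_R0; lra).
  assert (Bc : forall c x, Rabs c <= 1 -> Rabs ((fun _ : R => c) x) <= 2) by (intros; simpl; lra).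
  assert (BS : forall x, Rabs (Sx x) <= 2) by (intros; pose proof (Sx_bound x0); lra).
  assert (BmS : forall x, Rabs (- Sx x) <= 2) by (intros; apply B2, Sx_bound).
  assert (BpT : forall x, Rabs (- (p + Tx x)) <= 2).
  { intros; rewrite Rabs_Ropp; pose proof (Rabs_triang p (Tx x0)); pose proof (Tx_bound x0); lra. }
  assert (BTp : forall x, Rabs (- (Tx x - p)) <= 2).
  { intros; rewrite Rabs_Ropp; unfold Rminus; pose proof (Rabs_triang (Tx x0) (- p));
    rewrite Rabs_Ropp in *; pose proof (Tx_bound x0); lra. }
  pose proof (const2 _ (W1r_x q p r Phi Hqp Hq Hp Hpar) (W1r_y q p r Phi Hqp Hq Hp Hpar)) as C1.
  pose proof (const2 _ (W1i_x q p r Phi Hqp Hq Hp Hpar) (W1i_y q p r Phi Hqp Hq Hp Hpar)) as C2.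
  pose proof (const2 _ (W2r_x q p r Phi Hqp Hq Hp Hpar) (W2r_y q p r Phi Hqp Hq Hp Hpar)) as C3.
  pose proof (const2 _ (W2i_x q p r Phi Hqp Hq Hp Hpar) (W2i_y q p r Phi Hqp Hq Hp Hpar)) as C4.
  assert (Z1 : W1r Phi p q 0 0 = 0).
  { apply (van (-1) p q M _ Phi (fun x => - Sx x) (fun _ => 0) (fun x => - (p + Tx x)) (fun _ => - q));
      auto.
    intros x0 y0. rewrite <- (C1 x0 y0). unfold W1r. f_equal. f_equal. field. }
  assert (Z2 : W1i Phi p q 0 0 = 0).
  { apply (van (-1) p q M _ Phi (fun _ => 0) (fun x => - Sx x) (fun _ => q) (fun x => - (p + Tx x)));
      auto.
    intros x0 y0. rewrite <- (C2 x0 y0). unfold W1i. f_equal. f_equal. field. }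
  assert (Z3 : W2r Phi p q 0 0 = 0).
  { apply (van 1 p q M _ Phi (fun x => - (Tx x - p)) (fun _ => q) (fun x => Sx x) (fun _ => 0));
      auto.
    intros x0 y0. rewrite <- (C3 x0 y0). unfold W2r. f_equal. f_equal. field. }
  assert (Z4 : W2i Phi p q 0 0 = 0).
  { apply (van 1 p q M _ Phi (fun _ => - q) (fun x => - (Tx x - p)) (fun _ => 0) (fun x => Sx x));
      auto.
    intros x0 y0. rewrite <- (C4 x0 y0). unfold W2i. f_equal. f_equal. field. }
  rewrite Z1 in C1. rewrite Z2 in C2. rewrite Z3 in C3. rewrite Z4 in C4.
  specialize (C1 x y). specialize (C2 x y). specialize (C3 x y). specialize (C4 x y).
  unfold W1r, W1i, W2r, W2i in *.
  apply Rmult_integral in C1. apply Rmult_integral in C2.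
  apply Rmult_integral in C3. apply Rmult_integral in C4.
  destruct C1 as [h|C1]; [pose proof (exp_pos (-(p*x+q*y)/2)); lra|].
  destruct C2 as [h|C2]; [pose proof (exp_pos (-(p*x+q*y)/2)); lra|].
  destruct C3 as [h|C3]; [pose proof (exp_pos ((p*x+q*y)/2)); lra|].
  destruct C4 as [h|C4]; [pose proof (exp_pos ((p*x+q*y)/2)); lra|].
  destruct (final_alg r (exp x) q p (Sx x) (Tx x) (fa Phi x y) (fb Phi x y) (fc Phi x y) (fd Phi x y)
    (exp_pos x) Hq Hp eq_refl eq_refl Hq0 C1 C2 C3 C4) as (Ha & Hb & Hc & Hd).
  unfold fa, fb, fc, fd in *. destruct (Phi x y) as [[a b] [c d]]. simpl in *. rewrite Ha, Hb, Hc, Hd. reflexivity.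
Qed.
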